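(* Let $G$ be a graph (loops and multiple edges allowed) of girth $g$. If two closed geodesics of length $g$ in $G$ share a subwalk of length $\lfloor g/2 \rfloor+1$, then they coincide.
   Context: A walk is a finite sequence of oriented edges in which the initial vertex of each edge after the first equals the terminal vertex of the previous one; it is closed if it starts and ends at the same vertex, and closed walks are considered up to cyclic permutation. A walk is geodesic if it never traverses an edge and immediately retraverses it in the opposite direction; a closed geodesic is a closed walk that is locally geodesic (including at the base point). The girth of $G$ is the smallest length of a closed geodesic in $G$. *)

(* Defs.v *)
From mathcomp Require Import all_boot.
Set Implicit Arguments. Unset Strict Implicit. Unset Printing Implicit Defensive.

(* A graph with loops and multiple edges allowed (Serre's convention):
   a type of vertices, a type of oriented edges, an origin map and a
   fixed-point-free involution "reverse orientation".  A (multi-)edge is a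
   pair {e, rev e}; a loop is an e with origin e = terminus e. *)
Record graph := Graph {
  vert : Type;
  oedge : Type;
  origin : oedge -> vert;
  erev : oedge -> oedge;
  erevK : forall e, erev (erev e) = e;
  erev_nofix : forall e, erev e <> e
}.

Definition terminus (G : graph) (e : oedge G) : vert G := origin (erev e).

Definition gstep (G : graph) (e e' : oedge G) : Prop :=
  terminus e = origin e' /\ e' <> erev e.

Fixpoint rchain {T : Type} (r : T -> T -> Prop) (x : T) (s : seq T) : Prop :=
  match s with
  | [::] => True
  | y :: s' => r x y /\ rchain r y s'
  end.

(* A closed geodesic: a nonempty closed walk e_0 ... e_{n-1}
   (terminus e_i = origin e_{i+1}, terminus e_{n-1} = origin e_0) with no
   backtracking, including at the base point (e_0 <> erev e_{n-1}). *)
Definition closed_geodesic (G : graph) (c : seq (oedge G)) : Prop :=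
  match c with
  | [::] => False
  | e :: s => rchain (@gstep G) e (rcons s e)
  end.

Definition is_girth (G : graph) (g : nat) : Prop :=
  (exists c : seq (oedge G), closed_geodesic c /\ size c = g) /\
  (forall c : seq (oedge G), closed_geodesic c -> g <= size c).

Definition cyc_equal (T : Type) (c c' : seq T) : Prop :=
  exists k, c' = rot k c.

Definition cyc_subwalk (T : Type) (w c : seq T) : Prop :=
  size w <= size c /\ exists k, w = take (size w) (rot k c).

(* Main.v *)
Require Import Defs.
From Stdlib Require Import Classical.
From mathcomp Require Import all_boot.
From mathcomp Require Import zify.

Section Aux.
Variable G : graph.
Implicit Types (e a b x y : oedge G) (s p q : seq (oedge G)).

Lemma rchain_cat (r : oedge G -> oedge G -> Prop) x s t :
  rchain r x (s ++ t) <-> rchain r x s /\ rchain r (last x s) t.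
Proof.
elim: s x => [|y s IH] x /=; first by tauto.
rewrite IH; tauto.
Qed.

Lemma rchain_rcons (r : oedge G -> oedge G -> Prop) x s y :
  rchain r x (rcons s y) <-> rchain r x s /\ r (last x s) y.
Proof. rewrite -cats1 rchain_cat /=; tauto. Qed.

Lemma cg_rot1 c : @closed_geodesic G c -> @closed_geodesic G (rot 1 c).
Proof.
case: c => [|e s] // H; rewrite rot1_cons; case: s H => [|f s] //= H.
case: H => H1 H2.
apply/rchain_rcons; rewrite last_rcons; by split.
Qed.

Lemma cg_rot k c : @closed_geodesic G c -> @closed_geodesic G (rot k c).
Proof.
move=> H; elim: k => [|k IH]; first by rewrite rot0.
case: (ltnP k (size c)) => hk.
  by rewrite rotS //; apply: cg_rot1.
by rewrite rot_oversize ?rot_oversize in IH * => //; apply: leq_trans hk _.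
Qed.

Definition rv p := rev (map (@erev G) p).

Lemma erev_inj : injective (@erev G).
Proof. by move=> u v h; rewrite -(erevK u) -(erevK v) h. Qed.

Lemma gstep_rev l e : gstep l e -> gstep (erev e) (erev l).
Proof.
case=> h1 h2; split.
  by rewrite /terminus !erevK -h1.
by move=> h; apply: h2; rewrite h erevK.
Qed.

Lemma rv_chain b q : rchain (@gstep G) b q ->
  exists r, rv (b :: q) = erev (last b q) :: r /\
    rchain (@gstep G) (erev (last b q)) r /\ last (erev (last b q)) r = erev b
    /\ size r = size q.
Proof.
elim/last_ind: q => [|q e IH] /=.
  by move=> _; exists [::].
move/rchain_rcons=> [h1 h2].
case: (IH h1) => r [e1 [e2 [e3 e4]]].
exists (rv (b :: q)); split.
  by rewrite /rv -rcons_cons map_rcons rev_rcons last_rcons.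
rewrite last_rcons e1 /=; split; [split|].
- exact: gstep_rev.
- exact: e2.
- by split=> //; rewrite size_rcons e4.
Qed.

Lemma lemC a q1 b q2 :
  a <> b -> last a q1 <> last b q2 ->
  rchain (@gstep G) a q1 -> rchain (@gstep G) b q2 ->
  origin a = origin b -> terminus (last a q1) = terminus (last b q2) ->
  exists c, @closed_geodesic G c /\ size c = (size q1 + size q2).+2.
Proof.
move=> hab hl c1 c2 ho ht.
case: (@rv_chain b q2 c2) => r [e1 [e2 [e3 e4]]].
exists ((a :: q1) ++ rv (b :: q2)); split; last first.
  by rewrite size_cat /rv size_rev size_map /=; lia.
rewrite e1 /= -cats1 -catA /= rchain_cat; split => //=.
split.
  split; first by rewrite /terminus.
  by move/erev_inj => h; apply: hl.
rewrite rchain_cat e3 /=; split => //; split => //.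
split; first by rewrite /terminus erevK.
by rewrite erevK.
Qed.

Lemma lemD n a b q1 q2 y : size q1 <= n ->
  a <> b -> rchain (@gstep G) a (rcons q1 y) -> rchain (@gstep G) b (rcons q2 y) ->
  size q1 = size q2 -> origin a = origin b ->
  exists c, @closed_geodesic G c /\ size c <= (size q1 + size q2).+2.
Proof.
elim: n q1 q2 y => [|n IH] q1 q2 y hn hab h1 h2 hs ho.
- case: q1 hn hs h1 => // _ /esym/size0nil hq h1; subst q2.
  case: (@lemC a [::] b [::] hab hab) => //=.
    by case: h1 => [[? _] _]; case: h2 => [[? _] _]; congruence.
  by move=> c [? ?]; exists c; split => //; lia.
- case: (classic (last a q1 = last b q2)) => hl; last first.
  move/rchain_rcons: h1 => [h1 [t1 _]]; move/rchain_rcons: h2 => [h2 [t2 _]].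
  case: (@lemC a q1 b q2 hab hl h1 h2 ho).
    by rewrite t1 t2.
  by move=> c [? ?]; exists c; split => //; lia.
  move: hn hs h1 h2 hl.
  case/lastP: q1 => [|q1 e1]; case/lastP: q2 => [|q2 e2] //=; rewrite ?size_rcons //.
  rewrite !last_rcons => hn [hs] h1 h2 hl; subst e2.
    move/rchain_rcons: h1 => [h1 _]; move/rchain_rcons: h2 => [h2 _].
    case: (IH q1 q2 e1) => //;
    by move=> c [? ?]; exists c; split => //; lia.
Qed.

Lemma lemE x y p1 p2 :
  rchain (@gstep G) x (rcons p1 y) -> rchain (@gstep G) x (rcons p2 y) ->
  size p1 = size p2 -> p1 <> p2 ->
  exists c, @closed_geodesic G c /\ size c <= size p1 + size p2.
Proof.
elim: p1 x p2 => [|a q1 IH] x [|b q2] //= [ga h1] [gb h2] [hs] hne.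
case: (classic (a = b)) => hab.
  subst b; case: (IH a q2 h1 h2 hs) => [|c [? ?]]; first by move=> h; apply: hne; rewrite h.
  by exists c; split => //; lia.
case: (@lemD (size q1) a b q1 q2 y (leqnn _) hab h1 h2 hs).
  by case: ga => <- _; case: gb => <- _.
by move=> c [? ?]; exists c; split => //; lia.
Qed.

End Aux.

Theorem lemma2p1 (G : graph) (g : nat) (c1 c2 : seq (oedge G))
  (w : seq (oedge G)) :
  is_girth G g ->
  closed_geodesic c1 -> size c1 = g ->
  closed_geodesic c2 -> size c2 = g ->
  size w = g./2 + 1 ->
  cyc_subwalk w c1 -> cyc_subwalk w c2 ->
  cyc_equal c1 c2.
Proof.
move=> [_ gir] g1 s1 g2 s2 sw [_ [k1 e1]] [_ [k2 e2]].
rewrite rot_minn in e1; rewrite rot_minn in e2.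
set m1 := minn k1 (size c1) in e1.
set m2 := minn k2 (size c2) in e2.
have hm1 : m1 <= size c1 by rewrite /m1 geq_minr.
have hm2 : m2 <= size c2 by rewrite /m2 geq_minr.
have d1 := cat_take_drop (size w) (rot m1 c1).
have d2 := cat_take_drop (size w) (rot m2 c2).
rewrite -e1 in d1; rewrite -e2 in d2.
set p1 := drop (size w) (rot m1 c1) in d1.
set p2 := drop (size w) (rot m2 c2) in d2.
have sp1 : size p1 = g - size w by rewrite /p1 size_drop size_rot s1.
have sp2 : size p2 = g - size w by rewrite /p2 size_drop size_rot s2.
case: (classic (p1 = p2)) => hp.
  have hr : rot m1 c1 = rot m2 c2 by rewrite -d1 -d2 hp.
  exists (if (size c1 - m2) + m1 <= size c1 then (size c1 - m2) + m1
          else (size c1 - m2) + m1 - size c1).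
  rewrite -rot_add_mod ?leq_subr // hr.
  have -> : size c1 = size c2 by rewrite s1 s2.
  by have := rotK m2 c2; rewrite /rotr size_rot.
exfalso.
have r1 := @cg_rot G m1 c1 g1; have r2 := @cg_rot G m2 c2 g2.
rewrite -d1 in r1; rewrite -d2 in r2.
clearbody p1 p2.
clear e1 e2 d1 d2; case: w sw r1 r2 sp1 sp2 => [|y w'] /= sw r1 r2 sp1 sp2; first lia.
rewrite rcons_cat rchain_cat in r1; rewrite rcons_cat rchain_cat in r2.
case: r1 => _ r1; case: r2 => _ r2.
case: (@lemE G _ _ _ _ r1 r2 _ hp) => [|c [hc hsz]]; first by rewrite sp1 sp2.
have : 0 < size c by case: (c) hc.
have := gir c hc.
have := odd_double_half g.
move: (odd g) => o; rewrite -/(double _) in sw *.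
rewrite -addnn; move: (g./2) sw => h sw; case: o => /=; lia.
Qed.
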